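(* The path collection $\mathcal{P}_{light}=\{\Pi_{\langle x,y\rangle}:\langle x,y\rangle\text{ is an ordered light pair}\}$ satisfies: every path in $\mathcal{P}_{light}$ has length $O(D)$, and every edge of $G$ appears in at most $\widetilde{O}(D)$ paths of $\mathcal{P}_{light}$.
   Context: $G=(V,E)$ is a connected $n$-vertex graph of diameter $D$ with no cut vertex, $T$ a BFS tree rooted at $s$, $\pi(u,v)$ the $T$-path, $T_x$ the subtree at $x$, $V_x=V(T_x)\setminus\{x\}$; $\widetilde{O}$ hides polylog$(n)$ factors. The heavy child $x_h$ of a non-leaf $x$ is the child with largest subtree (ties broken consistently); other children and their edges to $x$ are light. $\mathcal{C}_x$ is the set of components of $G[V_x]$, $C_{x,v}$ the one containing $v$; for each $C\in\mathcal{C}_x$ a fixed edge $(u_C,v_C)\in E$ with $v_C\in C$, $u_C\notin V(T_x)$, and $\pi_x(s,C)=\pi(s,u_C)\circ(u_C,v_C)$. $x,y$ is independent if neither is a $T$-ancestor of the other. For independent $x,y$, $C\in\mathcal{C}_x$ is fully-$y$-sensitive if $y\in\pi_x(s,C)$ and $\pi_x(s,C)$ contains no $T$-edge $(y,y')$ with $x\notin\pi_y(s,C_{y,y'})$; $\mathcal{FS}(x,y)$ is the set of such components. An ordered independent pair $\langle x,y\rangle$ is an ordered light pair if there is $C\in\mathcal{FS}(x,y)$ with $(y,y_h)\notin\pi_x(s,C)$. For each ordered light pair choose arbitrarily such a component $C^{\langle x,y\rangle}$ and let $\Pi_{\langle x,y\rangle}=\pi(x,v_{C^{\langle x,y\rangle}})\circ(v_{C^{\langle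 x,y\rangle}},u_{C^{\langle x,y\rangle}})\circ\pi(u_{C^{\langle x,y\rangle}},y)$. *)

(* Defs.v *)
From mathcomp Require Import all_boot.
Set Implicit Arguments. Unset Strict Implicit. Unset Printing Implicit Defensive.

(* Simple undirected graph: vertex type V (finite), adjacency e (symmetric,
   irreflexive).  BFS tree T given by a parent function p rooted at s. *)

Section Graph.
Variables (V : finType) (e : rel V).

Fixpoint reach (k : nat) (u v : V) : bool :=
  if k is k'.+1 then (u == v) || [exists w, e u w && reach k' w v]
  else u == v.

(* graph distance (hop count); for reachable pairs it is < #|V| *)
Definition dist (u v : V) : nat := find (fun k => reach k u v) (iota 0 #|V|.+1).

Definition diameter : nat := \max_(u : V) \max_(v : V) dist u v.

Definition connected_graph : Prop := forall u v : V, connect e u v.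

Definition no_cut_vertex : Prop :=
  forall w u v : V, u != w -> v != w ->
    connect [rel a b | e a b && (a != w) && (b != w)] u v.

Definition simple_graph : Prop := symmetric e /\ irreflexive e.

Definition induced (S : {set V}) : rel V := [rel a b | e a b && (a \in S) && (b \in S)].
Definition comp (S : {set V}) (v : V) : {set V} := [set w in S | connect (induced S) v w].
Definition comps (S : {set V}) : {set {set V}} := [set comp S v | v in S].

Variables (s : V) (p : V -> V).

Definition bfs_tree : Prop :=
  p s = s /\ forall v, v != s -> e v (p v) /\ (dist s (p v)).+1 = dist s v.

Definition depth (v : V) : nat := dist s v.

Definition anc (a v : V) : bool := [exists k : 'I_#|V|.+1, iter k p v == a].

Definition subtree (x : V) : {set V} := [set v | anc x v].
Definition Vx (x : V) : {set V} := subtree x :\ x.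
Definition children (x : V) : {set V} := [set v | (v != s) && (p v == x)].

Definition indep (x y : V) : bool := ~~ anc x y && ~~ anc y x.

Definition lca (u v : V) : V := [arg max_(a > s | anc a u && anc a v) depth a].

Definition tpath (u v : V) : seq V :=
  let a := lca u v in
  traject p u (depth u - depth a).+1 ++ rev (traject p v (depth v - depth a)).

Definition edge_on (a b : V) (q : seq V) : bool :=
  let prs := zip q (behead q) in ((a, b) \in prs) || ((b, a) \in prs).

Variable h : V -> V. (* heavy child *)
Variable sel : V -> {set V} -> V * V. (* (u_C, v_C) for C in C_x *)

Definition pix (x : V) (C : {set V}) : seq V :=
  tpath s (sel x C).1 ++ [:: (sel x C).2].

Definition fully_sensitive (x y : V) (C : {set V}) : bool :=
  (y \in pix x C) &&
  [forall y', ((y' \in children y) && edge_on y y' (pix x C)) ==>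
              (x \in pix y (comp (Vx y) y'))].

Definition light_witness (x y : V) (C : {set V}) : bool :=
  [&& indep x y, C \in comps (Vx x), fully_sensitive x y C &
      ~~ ((children y != set0) && edge_on y (h y) (pix x C))].

Definition light_pair (x y : V) : bool := [exists C, light_witness x y C].

Variable pick : V -> V -> {set V}. (* C^{<x,y>} *)

Definition Pi (x y : V) : seq V :=
  let C := pick x y in tpath x (sel x C).2 ++ tpath (sel x C).1 y.

Definition heavy_child_ok : Prop :=
  forall x, children x != set0 ->
    h x \in children x /\ forall c, c \in children x -> #|subtree c| <= #|subtree (h x)|.

Definition sel_ok : Prop :=
  forall x C, x != s -> C \in comps (Vx x) ->
    [&& e (sel x C).1 (sel x C).2, (sel x C).2 \in C & (sel x C).1 \notin subtree x].

Definition pick_ok : Prop :=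
  forall x y, light_pair x y -> light_witness x y (pick x y).

End Graph.

(* Main.v *)
Require Import Defs.
From mathcomp Require Import all_boot.
From mathcomp Require Import zify.
From Stdlib Require Import Lia.
Set Implicit Arguments. Unset Strict Implicit. Unset Printing Implicit Defensive.

Section Pf.
Variables (V : finType) (e : rel V) (s : V) (p h : V -> V)
  (sel : V -> {set V} -> V * V) (pick : V -> V -> {set V}).
Hypothesis Hsimple : simple_graph e.
Hypothesis Hbfs : bfs_tree e s p.

Local Notation dep := (depth e s).
Local Notation anc := (anc p).

Lemma dep_s : dep s = 0.
Proof. by rewrite /depth /dist /= eqxx. Qed.

Lemma ps : p s = s. Proof. by case: Hbfs. Qed.

Lemma dep_p v : v != s -> (dep (p v)).+1 = dep v.
Proof. by case: Hbfs => _ H /H []. Qed.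

Lemma e_p v : v != s -> e v (p v).
Proof. by case: Hbfs => _ H /H []. Qed.

Lemma dep0 v : dep v = 0 -> v = s.
Proof. by case: (eqVneq v s) => // /dep_p <-. Qed.

Lemma iter_s k : iter k p s = s.
Proof. by elim: k => //= k ->; exact: ps. Qed.

Lemma dep_iter k v : dep (iter k p v) = dep v - k.
Proof.
elim: k => [|k IH]; first by rewrite subn0.
rewrite iterS; case: (eqVneq (iter k p v) s) => [E|ne].
  by rewrite E ps dep_s; rewrite E dep_s in IH; rewrite subnS -IH.
by have := dep_p ne; rewrite IH; lia.
Qed.

Lemma iter_dep v : iter (dep v) p v = s.
Proof. by apply: dep0; rewrite dep_iter subnn. Qed.

Lemma iter_big k v : dep v <= k -> iter k p v = s.
Proof. by move=> le; rewrite -(subnK le) iterD iter_dep iter_s. Qed.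

Lemma dep_lt v : dep v < #|V|.
Proof.
pose f (k : 'I_(dep v).+1) := iter k p v.
have inj : injective f.
  move=> i j /(congr1 dep); rewrite !dep_iter => E; apply: val_inj => /=.
  have hi := ltn_ord i; have hj := ltn_ord j.
  by move: E; rewrite /= in hi hj *; lia.
by have := leq_card f inj; rewrite card_ord.
Qed.

Lemma ancP a v : reflect (exists2 k, k <= dep v & iter k p v = a) (anc a v).
Proof.
apply: (iffP existsP) => [[k /eqP E]|[k le E]].
  case: (leqP k (dep v)) => [le|lt]; first by exists k.
  by exists (dep v) => //; rewrite iter_dep -E iter_big // ltnW.
have lt : k < #|V|.+1 by have := dep_lt v; lia.
by exists (Ordinal lt); rewrite /= E.
Qed.

Lemma anc_iter j w : anc (iter j p w) w.
Proof.
case: (leqP j (dep w)) => [le|lt]; first by apply/ancP; exists j.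
by apply/ancP; exists (dep w) => //; rewrite iter_dep iter_big // ltnW.
Qed.

Lemma anc_refl v : anc v v. Proof. exact: (anc_iter 0 v). Qed.

Lemma anc_s v : anc s v. Proof. by rewrite -(iter_dep v) anc_iter. Qed.

Lemma anc_dep a v : anc a v -> iter (dep v - dep a) p v = a /\ dep a <= dep v.
Proof.
case/ancP => k le <-; rewrite dep_iter; split; last exact: leq_subr.
by rewrite subKn.
Qed.

Lemma anc_eq a v : anc a v -> dep v <= dep a -> a = v.
Proof.
move=> /anc_dep [E le] le'.
have : dep v - dep a = 0 by apply/eqP; rewrite subn_eq0.
by move=> Z; rewrite Z in E.
Qed.

Lemma anc_trans a b c : anc a b -> anc b c -> anc a c.
Proof.
by move=> /anc_dep [<- _] /anc_dep [<- _]; rewrite -iterD anc_iter.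
Qed.

Lemma anc_sE a : anc a s -> a = s.
Proof. by move=> H; apply: anc_eq H _; rewrite dep_s. Qed.

Lemma anc_step a w : w != s -> anc a w = (a == w) || anc a (p w).
Proof.
move=> ne; apply/idP/idP.
  case/ancP => [[|k]] _ <-; first by rewrite eqxx.
  by rewrite iterSr anc_iter orbT.
case/orP => [/eqP ->|]; first exact: anc_refl.
by move=> H; apply: anc_trans H _; exact: (anc_iter 1 w).
Qed.


Lemma lca_l a b : anc a b -> lca e s p a b = a.
Proof.
move=> ab; rewrite /lca.
case: arg_maxnP => [|i /andP [ia ib] Hm]; first by rewrite !anc_s.
apply: anc_eq ia _; apply: Hm; by rewrite anc_refl ab.
Qed.

Lemma lca_r a b : anc b a -> lca e s p a b = b.
Proof.
move=> ba; rewrite /lca.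
case: arg_maxnP => [|i /andP [ia ib] Hm]; first by rewrite !anc_s.
apply: anc_eq ib _; apply: Hm; by rewrite anc_refl ba.
Qed.

Lemma tpath_down a b : anc a b -> tpath e s p a b = rev (traject p b (dep b - dep a).+1).
Proof.
move=> ab; rewrite /tpath lca_l // subnn [traject p b _.+1]trajectSr rev_rcons.
by have [-> _] := anc_dep ab.
Qed.

Lemma tpath_up a b : anc b a -> tpath e s p a b = traject p a (dep a - dep b).+1.
Proof. by move=> ba; rewrite /tpath lca_r // subnn /= cats0. Qed.

Lemma size_tpath a b : size (tpath e s p a b) <= dep a + dep b + 1.
Proof. rewrite /tpath size_cat size_rev !size_traject; lia. Qed.

Definition pairs (q : seq V) := zip q (behead q).

Lemma pairsP (x0 : V) q a b :
  reflect (exists2 i, i.+1 < size q & (nth x0 q i = a /\ nth x0 q i.+1 = b))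
          ((a,b) \in pairs q).
Proof.
have sz : size (pairs q) = (size q).-1.
  rewrite /pairs size_zip size_behead; case: (size q) => //= n; lia.
apply: (iffP (nthP (x0,x0))) => [[i lt E]|[i lt [Ea Eb]]].
  move: E; rewrite nth_zip_cond -/(pairs q) lt /= nth_behead => -[Ea Eb].
  by exists i => //; move: lt; rewrite sz; lia.
exists i; first by rewrite sz; lia.
by rewrite nth_zip_cond -/(pairs q) sz (_ : i < _) /= ?nth_behead ?Ea ?Eb //; lia.
Qed.

Lemma pairs_traj (f : V -> V) x n a b :
  reflect (exists2 i, i.+1 < n & (a = iter i f x /\ b = iter i.+1 f x))
          ((a,b) \in pairs (traject f x n)).
Proof.
apply: (iffP (pairsP x _ _ _)); rewrite size_traject => -[i lt [Ea Eb]]; exists i => //.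
  by rewrite -Ea -Eb !nth_traject //; lia.
by rewrite Ea Eb !nth_traject //; lia.
Qed.

Lemma pairs_rev q a b : ((a,b) \in pairs (rev q)) = ((b,a) \in pairs q).
Proof.
apply/(pairsP a)/(pairsP a); rewrite size_rev => -[i lt [Ea Eb]].
  exists (size q - i.+2); first lia.
  rewrite !nth_rev in Ea Eb; try lia.
  by split; [rewrite -[RHS]Eb | rewrite -[RHS]Ea; congr nth; lia].
exists (size q - i.+2); first lia.
rewrite !nth_rev; try lia.
by split; [rewrite -[RHS]Eb | rewrite -[RHS]Ea]; congr nth; lia.
Qed.
Lemma pairs_catl q1 q2 a b : (a,b) \in pairs q1 -> (a,b) \in pairs (q1 ++ q2).
Proof.
case/(pairsP a) => i lt [Ea Eb]; apply/(pairsP a); exists i.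
  by rewrite size_cat; apply: leq_trans lt (leq_addr _ _).
have l1 : i < size q1 by apply: ltnW.
by rewrite !nth_cat l1 lt.
Qed.

Lemma pairs_cat (x0 : V) q1 q2 a b : (a,b) \in pairs (q1 ++ q2) ->
  [\/ (a,b) \in pairs q1, (a,b) \in pairs q2 |
      [/\ 0 < size q1, 0 < size q2, a = nth x0 q1 (size q1).-1 & b = nth x0 q2 0]].
Proof.
case/(pairsP x0) => i; rewrite size_cat => lt [Ea Eb].
case: (ltnP i.+1 (size q1)) => [lt1|ge1].
  constructor 1; apply/(pairsP x0); exists i => //.
  by rewrite -Ea -Eb !nth_cat lt1 ltnW.
case: (eqVneq i.+1 (size q1)) => [E|ne].
  have i1 : i < size q1 by rewrite -E.
  constructor 3; split.
  - by rewrite -E.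
  - by rewrite -E addSn ltnS -{1}(addn0 i) ltn_add2l in lt.
  - by rewrite -Ea nth_cat i1 -E.
  - by rewrite -Eb nth_cat -E ltnn subnn.
have g : size q1 < i.+1 by rewrite ltn_neqAle ge1 andbT eq_sym.
rewrite ltnS in g.
constructor 2; apply/(pairsP x0); exists (i - size q1).
  by rewrite -subSn // ltn_subLR // addnC.
rewrite -Ea -Eb !nth_cat ltnNge g /= ltnNge (leqW g) /=.
by rewrite subSn.
Qed.


Lemma sym_e : symmetric e. Proof. by case: Hsimple. Qed.

Lemma sym_ind (S : {set V}) : symmetric (induced e S).
Proof. by move=> a b; rewrite /induced /= sym_e; case: (a \in S); case: (b \in S); rewrite ?andbF. Qed.

Lemma csym (S : {set V}) : connect_sym (induced e S).
Proof. exact: sym_connect_sym (sym_ind S). Qed.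

Lemma comp_eq (S C : {set V}) w : C \in comps e S -> w \in C -> C = Defs.comp e S w.
Proof.
case/imsetP => c0 c0S -> /[dup] wC.
rewrite inE => /andP [wS cw]; apply/setP => z; rewrite !inE.
by rewrite (same_connect (csym S) cw).
Qed.

Lemma comp_sub (S C : {set V}) w : C \in comps e S -> w \in C -> w \in S.
Proof. by case/imsetP => c0 _ ->; rewrite inE => /andP []. Qed.

Lemma comp_conn (S C : {set V}) v w : C \in comps e S -> v \in C -> w \in S ->
  connect (induced e S) w v -> C = Defs.comp e S w.
Proof.
move=> CS vC wS wv; apply: comp_eq => //.
rewrite (comp_eq CS vC) inE wS /=; by rewrite (csym S).
Qed.

Lemma conn_up (S : {set V}) v i : s \notin S -> (forall j, j <= i -> iter j p v \in S) ->
  connect (induced e S) v (iter i p v).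
Proof.
move=> sS; elim: i => [|i IH] H; first exact: connect0.
apply: connect_trans (IH (fun j lj => H j (leqW lj))) _.
apply: connect1; rewrite /induced /=.
have wS := H i (leqnSn i); have pS := H i.+1 (leqnn _); rewrite /= in pS.
rewrite wS pS !andbT e_p //; by apply: contraNneq sS => <-.
Qed.

Lemma s_notin_Vx x : s \notin Vx p x.
Proof.
rewrite /Vx !inE; apply/negP => /andP [ne /anc_sE E].
by rewrite E eqxx in ne.
Qed.

Definition Lset w := [set y' | anc y' w && (y' != s) && (y' != h (p y'))].

Hypothesis Hheavy : heavy_child_ok s p h.

Lemma subtree_p w : subtree p w \subset subtree p (p w).
Proof.
apply/subsetP => v; rewrite !inE; apply: anc_trans; exact: (anc_iter 1 w).
Qed.

Lemma Lset_bound_aux n w : dep w = n -> 2 ^ #|Lset w| * #|subtree p w| <= #|V|.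
Proof.
elim: n w => [|n IH] w dw.
  have -> : Lset w = set0.
    apply/setP => y; rewrite !inE (dep0 dw).
    by apply/negP => /andP [/andP [/anc_sE -> ]]; rewrite eqxx.
  by rewrite cards0 mul1n max_card.
have ws : w != s by apply/eqP => E; move: dw; rewrite E dep_s.
have dpw : dep (p w) = n by have := dep_p ws; rewrite dw => -[].
have IHp := IH _ dpw.
have sub1 : Lset w \subset w |: Lset (p w).
  apply/subsetP => y; rewrite !inE (anc_step _ ws).
  by case/andP => /andP [/orP [->|->] ->] ->; rewrite ?orbT.
case: (eqVneq w (h (p w))) => [hw|lw].
  have sub2 : Lset w \subset Lset (p w).
    apply/subsetP => y; rewrite !inE (anc_step _ ws).
    case/andP => /andP [/orP [/eqP E|->] ys] yh; last by rewrite ys yh.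
    by move: yh; rewrite E -hw eqxx.
  apply: leq_trans IHp; apply: leq_mul.
    by rewrite leq_pexp2l // subset_leq_card.
  exact: subset_leq_card (subtree_p w).
have cw : w \in children s p (p w) by rewrite inE ws eqxx.
have [hc hmax] : h (p w) \in children s p (p w) /\
    forall c, c \in children s p (p w) -> #|subtree p c| <= #|subtree p (h (p w))|.
  by apply: Hheavy; apply/set0Pn; exists w.
have hle := hmax _ cw.
move: hc; rewrite inE => /andP [hs /eqP hp].
have dh : dep (h (p w)) = dep w by rewrite -(dep_p hs) -(dep_p ws) hp.
have disj : [disjoint subtree p w & subtree p (h (p w))].
  apply/pred0P => v /=; apply/negP; rewrite !inE => /andP [/anc_dep [E1 _] /anc_dep [E2 _]].
  by move: lw; rewrite -[w in w != _]E1 -E2 dh eqxx.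
have sub3 : subtree p w :|: subtree p (h (p w)) \subset subtree p (p w) :\ p w.
  apply/subsetP => v; rewrite !inE => /orP [] av; apply/andP; split.
  - apply/negP => /eqP E; subst v; have [_ le] := anc_dep av.
    by move: le; rewrite -(dep_p ws); rewrite ltnn.
  - apply: anc_trans av; exact: (anc_iter 1 w).
  - apply/negP => /eqP E; subst v; have [_ le] := anc_dep av.
    by move: le; rewrite dh -(dep_p ws); rewrite ltnn.
  - apply: anc_trans av; rewrite -{1}hp; exact: (anc_iter 1 _).
have c1 := subset_leq_card sub3.
rewrite cardsU (disjoint_setI0 disj) cards0 subn0 in c1.
have c2 := cardsD1 (p w) (subtree p (p w)).
rewrite !inE anc_refl /= in c2.
have c3 : #|Lset w| <= (#|Lset (p w)|).+1.
  apply: leq_trans (subset_leq_card sub1) _; rewrite cardsU1; case: (w \notin _) => //.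
apply: leq_trans IHp.
apply: leq_trans (leq_mul (leq_pexp2l (isT : 0 < 2) c3) (leqnn _)) _.
rewrite expnS (mulnC 2) -mulnA leq_mul2l; apply/orP; right.
lia.
Qed.

Lemma Lset_bound w : #|Lset w| <= trunc_log 2 #|V|.
Proof.
apply: trunc_log_max => //; apply: leq_trans (@Lset_bound_aux (dep w) w (erefl _)).
rewrite -{1}(muln1 (2 ^ #|Lset w|)) leq_mul2l; apply/orP; right.
by apply/card_gt0P; exists w; rewrite inE anc_refl.
Qed.


Hypothesis Hsel : sel_ok e s p sel.
Hypothesis Hpick : pick_ok e s p h sel pick.

Lemma dep_D v : dep v <= diameter e.
Proof.
rewrite /depth /diameter.
apply: leq_trans (leq_bigmax (F := fun v => dist e s v) v) _.
exact: (leq_bigmax (F := fun u => \max_(v : V) dist e u v) s).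
Qed.

Lemma iter_back x v j : anc x v -> j <= dep v - dep x ->
  iter (dep v - dep x - j) p (iter j p v) = x.
Proof. by move=> /anc_dep [E _] le; rewrite -iterD subnK. Qed.

Lemma light_facts x y C u v : light_pair e s p h sel x y ->
  C = pick x y -> u = (sel x C).1 -> v = (sel x C).2 ->
  [/\ x != s, C \in comps e (Vx p x), v \in C, anc x v & v != x] /\
  [/\ anc y u,
      Pi e s p sel pick x y = rev (traject p v (dep v - dep x).+1) ++ traject p u (dep u - dep y).+1 &
      u != y -> [/\ iter (dep u - dep y).-1 p u != s, p (iter (dep u - dep y).-1 p u) = y,
                   iter (dep u - dep y).-1 p u != h y &
                   x \in pix e s p sel y (Defs.comp e (Vx p y) (iter (dep u - dep y).-1 p u))]].
Proof.
move=> lp EC Eu Ev; have := Hpick lp; rewrite /light_witness -EC.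
case/and4P => /andP [nxy nyx] Cc /andP [yin fs] nl.
have xs : x != s by apply: contraNneq nxy => ->; exact: anc_s.
have ys : y != s by apply: contraNneq nyx => ->; exact: anc_s.
have := Hsel xs Cc; rewrite -Eu -Ev => /and3P [euv vC uT].
have vV := comp_sub Cc vC; rewrite /Vx in_setD1 inE in vV; case/andP: vV => vx xv.
have pixE : pix e s p sel x C = rev (traject p u (dep u).+1) ++ [:: v].
  by rewrite /pix -Eu -Ev tpath_down ?anc_s // dep_s subn0.
rewrite pixE mem_cat mem_rev in yin.
have yu : anc y u.
  case/orP: yin => [/trajectP [i _ ->]|]; first exact: anc_iter.
  by rewrite inE => /eqP E; move: nxy; rewrite E xv.
split => //; split => //.
  by rewrite /Pi -EC -Eu -Ev tpath_down // tpath_up.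
move=> uy.
have [Ey _] := anc_dep yu.
have dpos : 0 < dep u - dep y.
  by rewrite lt0n; apply: contra uy => /eqP E; rewrite E /= in Ey; rewrite Ey.
set y' := iter (dep u - dep y).-1 p u.
have py : p y' = y by rewrite /y' -iterS prednK.
have y's : y' != s by apply: contra_neq ys => E; rewrite -py E ps.
have yc : y' \in children s p y by rewrite inE y's py eqxx.
have eo : edge_on y y' (pix e s p sel x C).
  rewrite /edge_on /= -/(pairs _) pixE; apply/orP; left.
  apply: pairs_catl; rewrite pairs_rev; apply/pairs_traj.
  exists (dep u - dep y).-1; last by rewrite prednK.
  by rewrite prednK //; rewrite ltnS leq_subr.
move/forallP: fs => /(_ y') /implyP /(_ (introT andP (conj yc eo))) xin.
split => //.
apply: contraNneq nl => E.
by rewrite -E eo andbT; apply/set0Pn; exists y'.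
Qed.


Definition LE u := u |: [set p y' | y' in Lset u].
Definition B1 w := \bigcup_(k < (dep w).+1)
  [set (iter k p w, y0) | y0 in LE (sel (iter k p w) (Defs.comp e (Vx p (iter k p w)) w)).1].
Definition B2 w := \bigcup_(y' in Lset w)
  [set (x0, p y') | x0 in pix e s p sel (p y') (Defs.comp e (Vx p (p y')) y')].
Definition Bw w := B1 w :|: B2 w.

Lemma inVx x v j : anc x v -> j < dep v - dep x -> iter j p v \in Vx p x.
Proof.
move=> xv lt; rewrite /Vx in_setD1 inE; apply/andP; split.
  apply/eqP => E; have := dep_iter j v; rewrite E; have [_ le] := anc_dep xv; lia.
rewrite -{1}(iter_back xv (ltnW lt)); exact: anc_iter.
Qed.

Lemma pair_mem x y a' b' : light_pair e s p h sel x y ->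
  (a',b') \in pairs (Pi e s p sel pick x y) -> (x,y) \in Bw a' :|: Bw b'.
Proof.
move=> lp pin.
set C := pick x y; set u := (sel x C).1; set v := (sel x C).2.
have [[xs Cc vC xv vx] [yu PiE light]] := light_facts lp (erefl C) (erefl u) (erefl v).
have yLE : y \in LE u.
  rewrite /LE !inE; case: (eqVneq u y) => [->|uy]; first by rewrite ?eqxx ?setU11.
  have [y's py yh xin] := light uy.
  apply/orP; right; apply/imsetP; exists (iter (dep u - dep y).-1 p u) => //.
  by rewrite !inE anc_iter y's py yh.
have B1mem : forall w k, k < (dep w).+1 -> iter k p w = x ->
    Defs.comp e (Vx p x) w = C -> (x,y) \in B1 w.
  move=> w k lt Ek Ec; apply/bigcupP; exists (Ordinal lt) => //=.
  by rewrite Ek Ec; apply/imsetP; exists y.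
rewrite PiE in pin; case/(pairs_cat v): pin => [pin|pin|[_ _ Ea Eb]].
- rewrite pairs_rev in pin; case/pairs_traj: pin => i lt [Eb Ea].
  rewrite ltnS in lt.
  rewrite /Bw !in_setU; apply/orP; right; apply/orP; left.
  apply: (B1mem _ (dep v - dep x - i)).
  + rewrite Eb dep_iter ltnS; apply: leq_sub2r; exact: leq_subr.
  + by rewrite Eb iter_back // ltnW.
  + apply/esym; apply: comp_conn Cc vC _ _; rewrite Eb; first exact: inVx.
    rewrite csym; apply: conn_up (s_notin_Vx x) _ => j lj; apply: inVx => //.
    exact: leq_ltn_trans lj lt.
- case/pairs_traj: pin => i lt [Ea Eb].
  have uy : u != y.
    apply/eqP => E; move: lt; rewrite E subnn; by [].
  have [y's py yh xin] := light uy.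
  rewrite /Bw !in_setU; apply/orP; left; apply/orP; right.
  apply/bigcupP; exists (iter (dep u - dep y).-1 p u).
    rewrite !inE y's py yh !andbT Ea.
    have le : i <= (dep u - dep y).-1 by rewrite -ltnS prednK //; apply: leq_ltn_trans (leq0n i) _; rewrite -ltnS.
    by rewrite -(subnK le) iterD anc_iter.
  by rewrite py; apply/imsetP; exists x.
- have Ev : a' = v.
    rewrite Ea size_rev size_traject -pred_Sn nth_rev ?size_traject // subnn.
    by [].
  rewrite /Bw !in_setU; apply/orP; left; apply/orP; left.
  apply: (B1mem _ (dep v - dep x)).
  + by rewrite Ev ltnS leq_subr.
  + by rewrite Ev; have [-> _] := anc_dep xv.
  + by rewrite Ev; apply/esym; exact: comp_eq Cc vC.
Qed.

Lemma card_bigcup_le (I : finType) (P : pred I) (F : I -> {set (V * V)}) :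
  #|\bigcup_(i | P i) F i| <= \sum_(i | P i) #|F i|.
Proof.
elim/big_rec2: _ => [|i n A _ IH]; first by rewrite cards0.
rewrite cardsU; apply: leq_trans (leq_subr _ _) _; by rewrite leq_add2l.
Qed.

Local Notation L := (trunc_log 2 #|V|).

Lemma card_LE u : #|LE u| <= L.+1.
Proof.
rewrite /LE cardsU1 -add1n; apply: leq_add; first by case: (_ \notin _).
apply: leq_trans (leq_imset_card _ _) _; exact: Lset_bound.
Qed.

Lemma card_B1 w : #|B1 w| <= (diameter e).+1 * L.+1.
Proof.
apply: leq_trans (card_bigcup_le _ _) _.
apply: (@leq_trans (\sum_(k < (dep w).+1) L.+1)).
  by apply: leq_sum => k _; apply: leq_trans (leq_imset_card _ _) (card_LE _).
by rewrite sum_nat_const card_ord leq_mul2r ltnS dep_D orbT.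
Qed.

Lemma size_pix y C : size (pix e s p sel y C) <= (diameter e).+2.
Proof.
rewrite /pix size_cat /= addn1 ltnS; apply: leq_trans (size_tpath _ _) _.
by rewrite dep_s add0n addn1 ltnS dep_D.
Qed.

Lemma card_B2 w : #|B2 w| <= L * (diameter e).+2.
Proof.
apply: leq_trans (card_bigcup_le _ _) _.
apply: (@leq_trans (\sum_(k in Lset w) (diameter e).+2)).
  apply: leq_sum => k _; apply: leq_trans (leq_imset_card _ _) _.
  exact: leq_trans (card_size _) (size_pix _ _).
by rewrite sum_nat_const leq_mul2r Lset_bound orbT.
Qed.


Lemma card_setU_le (A B : {set (V * V)}) : #|A :|: B| <= #|A| + #|B|.
Proof. by rewrite cardsU leq_subr. Qed.

Lemma light_D x y : light_pair e s p h sel x y -> 0 < diameter e.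
Proof.
move=> lp; have [[xs _ _ _ _] _] := light_facts lp (erefl _) (erefl _) (erefl _).
apply: leq_trans (dep_D x); rewrite lt0n; apply/eqP => /dep0 E.
by rewrite E eqxx in xs.
Qed.

Lemma part1 x y : light_pair e s p h sel x y ->
  (size (Pi e s p sel pick x y)).-1 <= 10 * diameter e.
Proof.
move=> lp; have Dp := light_D lp.
rewrite /Pi size_cat.
set C := pick x y.
have s1 := size_tpath x (sel x C).2; have s2 := size_tpath (sel x C).1 y.
have := dep_D x; have := dep_D (sel x C).2; have := dep_D (sel x C).1; have := dep_D y.
lia.
Qed.

Lemma part2 a b :
  #|[set xy : V * V | light_pair e s p h sel xy.1 xy.2 &&
                      edge_on a b (Pi e s p sel pick xy.1 xy.2)]|
    <= 10 * diameter e * (trunc_log 2 #|V|).+1 ^ 1.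
Proof.
case: (posnP (diameter e)) => [D0|Dpos].
  rewrite D0 muln0 mul0n leqn0 cards_eq0; apply/eqP/setP => -[x y].
  rewrite !inE /=; apply/negP => /andP [lp _].
  by have := light_D lp; rewrite D0.
have sub : [set xy : V * V | light_pair e s p h sel xy.1 xy.2 &&
                      edge_on a b (Pi e s p sel pick xy.1 xy.2)] \subset Bw a :|: Bw b.
  apply/subsetP => -[x y]; rewrite inE /= => /andP [lp].
  rewrite /edge_on /= => /orP [H|H]; first exact: pair_mem lp H.
  by rewrite setUC; exact: pair_mem lp H.
apply: leq_trans (subset_leq_card sub) _.
apply: leq_trans (card_setU_le _ _) _.
rewrite /Bw.
apply: leq_trans (leq_add (card_setU_le (B1 a) (B2 a)) (card_setU_le (B1 b) (B2 b))) _.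
apply: leq_trans (leq_add (leq_add (card_B1 a) (card_B2 a)) (leq_add (card_B1 b) (card_B2 b))) _.
rewrite expn1.
move: Dpos; set D := diameter e; set LL := trunc_log 2 #|V| => Dpos.
have e1 : D.+1 * LL.+1 = D * LL + D + LL + 1 by rewrite mulSn mulnS; lia.
have e2 : LL * D.+2 = D * LL + 2 * LL by rewrite !mulnS mulnC; lia.
have e3 : 10 * D * LL.+1 = 10 * (D * LL) + 10 * D by rewrite mulnS -mulnA; lia.
have e4 : LL <= D * LL by rewrite -{1}(mul1n LL) leq_mul2r Dpos orbT.
rewrite e3 e1 e2; move: (D * LL) e4 => P e4; lia.
Qed.

End Pf.

Theorem lemma4p19 :
  exists c k : nat,
  forall (V : finType) (e : rel V) (s : V) (p h : V -> V)
         (sel : V -> {set V} -> V * V) (pick : V -> V -> {set V}),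
    simple_graph e -> connected_graph e -> no_cut_vertex e ->
    bfs_tree e s p ->
    heavy_child_ok s p h ->
    sel_ok e s p sel ->
    pick_ok e s p h sel pick ->
    (forall x y, light_pair e s p h sel x y ->
       (size (Pi e s p sel pick x y)).-1 <= c * diameter e) /\
    (forall a b, e a b ->
       #|[set xy : V * V | light_pair e s p h sel xy.1 xy.2 &&
                            edge_on a b (Pi e s p sel pick xy.1 xy.2)]|
         <= c * diameter e * (trunc_log 2 #|V|).+1 ^ k).
Proof.
exists 10, 1 => V e s p h sel pick Hs _ _ Hb Hh Hse Hp; split.
  by move=> x y; apply: part1.
by move=> a b _; apply: part2.
Qed.
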